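(* Consider the linear program $$p^*(t_0,X_0)=\sup\ \langle 1,\mu_p\rangle$$ subject to $\mu_p+\mu_c=\delta_{t_0}\otimes\mu_0+\mathcal L^\dagger\mu$, $\langle1,\mu_0\rangle=1$, $\mu_0\in\mathcal M_+(X_0)$, $\mu,\mu_c\in\mathcal M_+([t_0,T]\times X)$, $\mu_p\in\mathcal M_+([t_0,T]\times X_u)$. Its optimal value equals the optimal value of the linear program $$\sup\ \langle I_{X_u},\mu_\tau\rangle$$ subject to $\mu_\tau=\delta_{t_0}\otimes\mu_0+\mathcal L^\dagger\mu$, $\langle 1,\mu_0\rangle=1$, $\mu_0\in\mathcal M_+(X_0)$, $\mu,\mu_\tau\in\mathcal M_+([t_0,T]\times X)$.
   Context: Let $X\subseteq\mathbb R^n$, $X_0,X_u\subseteq X$, $t_0<T$. A stochastic process on $X$ is described by its generator $\mathcal L$, a linear operator on a class of test functions $\mathcal C=\mathrm{dom}(\mathcal L)$ of functions $v(t,x)$ on $[t_0,T]\times X$, mapping $\mathcal C$ into continuous functions. $\mathcal M_+(S)$ denotes nonnegative Borel measures on $S$, $\langle f,\mu\rangle=\int f\,d\mu$, $I_{X_u}$ is the indicator function of $X_u$, $\delta_{t_0}$ is the Dirac measure at $t_0$, $\otimes$ is the product of measures. A constraint $\nu=\delta_{t_0}\otimes\mu_0+\mathcal L^\dagger\mu$ means: for all $v\in\mathcal C$, $\langle v,\nu\rangle=\int v(t_0,x)\,d\mu_0(x)+\langle\mathcal Lv,\mu\rangle$. *)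

(* Defs.v *)
From HB Require Import structures.
From mathcomp Require Import all_boot all_order all_algebra.
From mathcomp Require Import all_classical all_reals all_analysis.
Set Implicit Arguments. Unset Strict Implicit. Unset Printing Implicit Defensive.
Import Order.TTheory GRing.Theory Num.Theory.
Import numFieldNormedType.Exports.
Local Open Scope classical_set_scope.
Local Open Scope ring_scope.
Local Open Scope ereal_scope.

Notation Rn R n := (g_sigma_algebraType (@open 'rV[R]_n)).

Notation TX R n := (R * Rn R n)%type.

Definition tbox (R : realType) (n : nat) (t0 T : R) (A : set (Rn R n))
  : set (TX R n) := `[t0, T]%classic `*` A.

(* mu is (the extension by zero of) a nonnegative measure on S, i.e. a
   measure on the ambient space giving no mass outside S. *)
Definition supported_on d (U : measurableType d) (R : realType)
  (mu : {measure set U -> \bar R}) (S : set U) : Prop :=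
  mu (~` S) = 0.

Definition pairing d (U : measurableType d) (R : realType)
  (mu : {measure set U -> \bar R}) (f : U -> R) : \bar R :=
  \int[mu]_z (f z)%:E.

Definition generator (R : realType) (n : nat) (t0 T : R) (X : set (Rn R n))
  (C : set (TX R n -> R)) (L : (TX R n -> R) -> (TX R n -> R)) : Prop :=
  [/\ C (fun _ => 0%R),
      (forall (a b : R) v w, C v -> C w -> C (fun z => a * v z + b * w z)%R),
      (forall (a b : R) v w, C v -> C w ->
         L (fun z => a * v z + b * w z)%R = (fun z => a * L v z + b * L w z)%R)
    & (forall v, C v ->
         {within (tbox t0 T X : set (R * 'rV[R]_n)),
            continuous (L v : R * 'rV[R]_n -> R)})].

(* The constraint  nu = delta_{t0} (x) mu0 + L^dagger mu : for every v in C,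
   <v, nu> = \int v(t0,x) dmu0(x) + <L v, mu>. *)
Definition adjoint_eq (R : realType) (n : nat) (t0 : R)
  (C : set (TX R n -> R)) (L : (TX R n -> R) -> (TX R n -> R))
  (nu : {measure set TX R n -> \bar R}) (mu0 : {measure set Rn R n -> \bar R})
  (mu : {measure set TX R n -> \bar R}) : Prop :=
  forall v, C v ->
    pairing nu v = \int[mu0]_x (v (t0, x))%:E + pairing mu (L v).

Definition LP1_feasible (R : realType) (n : nat) (t0 T : R)
  (X X0 Xu : set (Rn R n)) (C : set (TX R n -> R))
  (L : (TX R n -> R) -> (TX R n -> R))
  (mu0 : {measure set Rn R n -> \bar R})
  (mu mup muc : {measure set TX R n -> \bar R}) : Prop :=
  adjoint_eq t0 C L (measure_add mup muc) mu0 mu /\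
  pairing mu0 (fun _ => 1%R) = 1 /\
  supported_on mu0 X0 /\
  supported_on mu (tbox t0 T X) /\
  supported_on muc (tbox t0 T X) /\
  supported_on mup (tbox t0 T Xu).

Definition LP1_value (R : realType) (n : nat) (t0 T : R)
  (X X0 Xu : set (Rn R n)) (C : set (TX R n -> R))
  (L : (TX R n -> R) -> (TX R n -> R)) : \bar R :=
  ereal_sup [set r | exists mu0 mu mup muc,
    LP1_feasible t0 T X X0 Xu C L mu0 mu mup muc /\
    r = pairing mup (fun _ => 1%R)].

Definition LP2_feasible (R : realType) (n : nat) (t0 T : R)
  (X X0 : set (Rn R n)) (C : set (TX R n -> R))
  (L : (TX R n -> R) -> (TX R n -> R))
  (mu0 : {measure set Rn R n -> \bar R})
  (mu mut : {measure set TX R n -> \bar R}) : Prop :=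
  adjoint_eq t0 C L mut mu0 mu /\
  pairing mu0 (fun _ => 1%R) = 1 /\
  supported_on mu0 X0 /\
  supported_on mu (tbox t0 T X) /\
  supported_on mut (tbox t0 T X).

Definition LP2_value (R : realType) (n : nat) (t0 T : R)
  (X X0 Xu : set (Rn R n)) (C : set (TX R n -> R))
  (L : (TX R n -> R) -> (TX R n -> R)) : \bar R :=
  ereal_sup [set r | exists mu0 mu mut,
    LP2_feasible t0 T X X0 C L mu0 mu mut /\
    r = pairing mut (fun z : TX R n => \1_Xu z.2)].

(* Main.v *)
Require Import Defs.
From HB Require Import structures.
From mathcomp Require Import all_boot all_order all_algebra.
From mathcomp Require Import all_classical all_reals all_analysis.
From mathcomp Require Import measurable_realfun.
Import Order.TTheory GRing.Theory Num.Theory.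
Import numFieldNormedType.Exports.
Local Open Scope classical_set_scope.
Local Open Scope ring_scope.
Local Open Scope ereal_scope.

Section patch.
Context d (T : measurableType d) (R : realType).
Variables (m1 m2 : {measure set T -> \bar R}).

Definition patch (B : set T) : \bar R :=
  if pselect (measurable B) then m1 B else m2 B.

Lemma patchE B : measurable B -> patch B = m1 B.
Proof. by move=> mB; rewrite /patch; case: pselect. Qed.

Let patch0 : patch set0 = 0.
Proof. by rewrite patchE ?measure0. Qed.

Let patch_ge0 B : 0 <= patch B.
Proof. by rewrite /patch; case: pselect. Qed.

Let patch_ssa : semi_sigma_additive patch.
Proof.
move=> F mF tF mU; rewrite patchE //.
have -> : (fun n => \sum_(0 <= i < n) patch (F i)) =
          (fun n => \sum_(0 <= i < n) m1 (F i)).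
  by apply: funext => k; apply: eq_bigr => i _; rewrite patchE.
exact: measure_semi_sigma_additive.
Qed.

HB.instance Definition _ := isMeasure.Build _ _ _ patch patch0 patch_ge0 patch_ssa.
End patch.
Arguments patch {d T R}.

Theorem theorem2 (R : realType) (n : nat) (t0 T : R)
  (X X0 Xu : set (Rn R n))
  (C : set (TX R n -> R)) (L : (TX R n -> R) -> (TX R n -> R)) :
  (t0 < T)%R ->
  measurable X -> measurable X0 -> measurable Xu ->
  X0 `<=` X -> Xu `<=` X ->
  generator t0 T X C L ->
  LP1_value t0 T X X0 Xu C L = LP2_value t0 T X X0 Xu C L.
Proof.
move=> _ mX _ mXu _ XuX _.
have mTX : measurable (tbox t0 T X) by apply: measurableX => //; exact: measurable_itv.
have mTXu : measurable (tbox t0 T Xu) by apply: measurableX => //; exact: measurable_itv.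
pose A : set (TX R n) := [set: R] `*` Xu.
have mA : measurable A by apply: measurableX.
have mAc : measurable (~` A) by apply: measurableC.
have indE : forall z : TX R n, \1_Xu z.2 = \1_A z :> R.
  move=> z; rewrite /indic; congr (_%:R).
  by case: z => a b; rewrite /A in_setX in_setT.
apply/eqP; rewrite eq_le; apply/andP; split.
- apply/ereal_supP => _ [mu0 [mu [mup [muc [[Hadj [H1 [H0 [Hmu [Hc Hp]]]] ->]]]]]].
  apply: le_ereal_sup_tmp.
  exists (pairing (measure_add mup muc) (fun z : TX R n => \1_Xu z.2)).
    exists mu0, mu, (measure_add mup muc); split => //; split; [exact: Hadj|split; [exact: H1|split; [exact: H0|split; [exact: Hmu|]]]].
    rewrite /supported_on; transitivity (mup (~` tbox t0 T X) + muc (~` tbox t0 T X)); first exact: measure_addE.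
    have h1 : mup (~` tbox t0 T X) = 0.
      apply/eqP; rewrite eq_le measure_ge0 andbT -Hp le_measure ?inE //;
        try exact: measurableC.
      by apply: subsetC => -[t x] [? ?]; split => //; exact: XuX.
    by rewrite h1 Hc adde0.
  rewrite /pairing (_ : (fun z : TX R n => (\1_Xu z.2)%:E) = (fun z => (\1_A z)%:E)); last first.
    by apply: funext => z; rewrite indE.
  rewrite ge0_integral_measure_add //; last first.
    apply/measurable_EFinP; exact: measurable_indic.
  rewrite integral_cst // mul1e.
  apply: (@le_trans _ _ (\int[mup]_x (\1_A x)%:E)); last first.
    rewrite leeDl //; apply: integral_ge0 => z _; by rewrite lee_fin /indic.
  rewrite integral_indic // setIT.
  have -> : [set: TX R n] = A `|` ~` A by rewrite setUCr.
  rewrite measureU //; last by rewrite setICr.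
  rewrite -[leRHS]adde0; apply: leeD => //.
  rewrite -Hp le_measure ?inE //; try exact: measurableC.
  by apply: subsetC => -[t x] [? ?]; split.
- apply/ereal_supP => _ [mu0 [mu [mut [[Hadj [H1 [H0 [Hmu Ht]]]] ->]]]].
  apply: le_ereal_sup_tmp.
  pose mup := patch (mrestr mut mA) mzero.
  pose muc := patch (mrestr mut mAc) mut.
  have Hsum : (measure_add mup muc : {measure set (TX R n) -> \bar R}) = mut.
    apply: eq_measure; apply: funext => B /=.
    transitivity (mup B + muc B); first exact: measure_addE.
    rewrite /mup /muc /patch; case: pselect => mB /=.
      rewrite /mrestr -measureU //; try exact: measurableI.
        by rewrite -setIUr setUCr setIT.
      by rewrite setIACA setICr !setI0.
    by rewrite add0e.
  exists (pairing mup (fun _ => 1%R)).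
    exists mu0, mu, mup, muc; split => //; split.
      match goal with |- adjoint_eq _ _ _ ?m _ _ => have Hs : m = mut end.
        apply: eq_measure; apply: funext => B.
        have <- : (measure_add mup muc : {measure set (TX R n) -> \bar R}) B = mut B by rewrite Hsum.
        by [].
      by rewrite Hs.
    split; first exact: H1. split; first exact: H0. split; first exact: Hmu.
    split.
    + rewrite /supported_on.
      change (patch (mrestr mut mAc) mut (~` tbox t0 T X) = 0).
      rewrite patchE; last exact: measurableC.
      change (mut (~` tbox t0 T X `&` ~` A) = 0).
      apply/eqP; rewrite eq_le measure_ge0 andbT -Ht le_measure ?inE //;
        try (apply: measurableI; exact: measurableC); try exact: measurableC.
    + rewrite /supported_on.
      change (patch (mrestr mut mA) mzero (~` tbox t0 T Xu) = 0).
      rewrite patchE; last exact: measurableC.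
      change (mut (~` tbox t0 T Xu `&` A) = 0).
      apply/eqP; rewrite eq_le measure_ge0 andbT -Ht le_measure ?inE //;
        try (apply: measurableI => //; exact: measurableC); try exact: measurableC.
      move=> [t x] [h1 [_ h2]] [h3 h4]; apply: h1; split => //.
  rewrite /pairing (_ : (fun z : TX R n => (\1_Xu z.2)%:E) = (fun z => (\1_A z)%:E)); last first.
    by apply: funext => z; rewrite indE.
  rewrite integral_indic // setIT integral_cst // mul1e.
  change (mut A <= patch (mrestr mut mA) mzero [set: TX R n]).
  rewrite patchE //.
  change (mut A <= mut ([set: TX R n] `&` A)).
  by rewrite setTI.
Qed.
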